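(* Let $\phi\in L^2(\mathbb{R}^3,\mathbb{C}^2)$ be not the zero function. Then there exists $A\in SU(2)$ such that $\phi$ and $A\bullet\phi$ are linearly independent.
   Context: Let $\sigma=(\sigma_1,\sigma_2,\sigma_3)$ be the Pauli matrices. To each $A\in SU(2)$ is associated the unique rotation $R_A\in SO(3)$ such that $(R_Ax)\cdot\sigma=A(x\cdot\sigma)A^{-1}$ for all $x\in\mathbb{R}^3$. The unitary representation $\bullet$ of $SU(2)$ on $L^2(\mathbb{R}^3,\mathbb{C}^2)$ is $(A\bullet\phi)(x):=A\,\phi(R_A^{-1}x)$. *)

(* Defs.v *)
From HB Require Import structures.
From mathcomp Require Import all_boot all_order all_algebra.
From mathcomp Require Import all_classical all_reals all_analysis.
From mathcomp Require Import complex.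

Set Implicit Arguments.
Unset Strict Implicit.
Unset Printing Implicit Defensive.

Import Order.TTheory GRing.Theory Num.Theory.
Local Open Scope classical_set_scope.
Local Open Scope ring_scope.
Local Open Scope complex_scope.

Section Defs.
Variable R : realType.

Definition R3 := ((R * R) * R)%type.

Definition leb3 := ((@lebesgue_measure R \x @lebesgue_measure R) \x @lebesgue_measure R)%E.

Definition vec3 (x : R3) : 'cV[R]_3 :=
  \col_(i < 3) (if i == 0 :> nat then x.1.1 else if i == 1 :> nat then x.1.2 else x.2).
Definition pt3 (v : 'cV[R]_3) : R3 := ((v 0 0, v 1 0), v 2 0).

Definition mx2 (a b c d : R[i]) : 'M[R[i]]_2 :=
  \matrix_(i < 2, j < 2) (if i == 0 :> nat then (if j == 0 :> nat then a else b)
                           else (if j == 0 :> nat then c else d)).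

Definition pauli (k : 'I_3) : 'M[R[i]]_2 :=
  if k == 0 :> nat then mx2 0 1 1 0
  else if k == 1 :> nat then mx2 0 (- 'i) 'i 0
  else mx2 1 0 0 (-1).

Definition xsigma (x : 'cV[R]_3) : 'M[R[i]]_2 := \sum_(k < 3) (x k 0)%:C *: pauli k.

Definition adj2 (A : 'M[R[i]]_2) : 'M[R[i]]_2 := (map_mx conjc A)^T.

Definition SU2 : set 'M[R[i]]_2 :=
  [set A | A *m adj2 A = 1%:M /\ \det A = 1].

Definition SO3 : set 'M[R]_3 :=
  [set M | M^T *m M = 1%:M /\ \det M = 1].

(* R_A : the (unique) rotation with (R_A x).sigma = A (x.sigma) A^{-1} for all x *)
Definition rotA (A : 'M[R[i]]_2) : 'M[R]_3 :=
  xget 1%:M [set M | SO3 M /\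
     forall x : 'cV[R]_3, xsigma (M *m x) = A *m xsigma x *m invmx A].

Definition act (A : 'M[R[i]]_2) (phi : R3 -> 'cV[R[i]]_2) : R3 -> 'cV[R[i]]_2 :=
  fun x => A *m phi (pt3 (invmx (rotA A) *m vec3 x)).

(* phi is (a representative of) an element of L^2(R^3, C^2) *)
Definition L2 (phi : R3 -> 'cV[R[i]]_2) : Prop :=
  (forall k : 'I_2, measurable_fun setT (fun x => complex.Re (phi x k 0)) /\
                    measurable_fun setT (fun x => complex.Im (phi x k 0))) /\
  (\int[leb3]_x (\sum_(k < 2) ((complex.Re (phi x k 0)) ^+ 2 + (complex.Im (phi x k 0)) ^+ 2))%:E < +oo)%E.

Definition lin_indep_L2 (phi psi : R3 -> 'cV[R[i]]_2) : Prop :=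
  forall a b : R[i], {ae leb3, forall x, a *: phi x + b *: psi x = 0} -> a = 0 /\ b = 0.

End Defs.

(* Main.v *)
Require Import Defs.
From HB Require Import structures.
From mathcomp Require Import all_boot all_order all_algebra.
From mathcomp Require Import all_classical all_reals all_analysis.
From mathcomp Require Import complex.
From mathcomp Require Import ring lra.
Import Order.TTheory GRing.Theory Num.Theory.
Local Open Scope classical_set_scope.
Local Open Scope ring_scope.
Local Open Scope complex_scope.
Section prodsf.
Local Open Scope ereal_scope.
Lemma prod_sf d1 d2 (T1 : measurableType d1) (T2 : measurableType d2) (R : realType)
  (m1 : {sigma_finite_measure set T1 -> \bar R})
  (m2 : {sigma_finite_measure set T2 -> \bar R}) : sigma_finite setT (m1 \x m2).
Proof.
have /sigma_finiteP[F [TF ndF Foo]] := sigma_finiteT m1.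
have /sigma_finiteP[G [TG ndG Goo]] := sigma_finiteT m2.
exists (fun n => F n `*` G n).
 rewrite -setXTT TF TG predeqE => -[x y]; split.
    move=> [/= [n _ Fnx] [k _ Gky]]; exists (maxn n k) => //; split.
    - by move: x Fnx; exact/subsetPset/ndF/leq_maxl.
    - by move: y Gky; exact/subsetPset/ndG/leq_maxr.
  by move=> [n _ []/= ? ?]; split; exists n.
move=> k; have [? ?] := Foo k; have [? ?] := Goo k.
split; first exact: measurableX.
by rewrite product_measure1E// lte_mul_pinfty// ge0_fin_numE.
Qed.
End prodsf.

Definition prodsf d1 d2 (T1 : measurableType d1) (T2 : measurableType d2) (R : realType)
  (m1 : {sigma_finite_measure set T1 -> \bar R})
  (m2 : {sigma_finite_measure set T2 -> \bar R}) : {sigma_finite_measure set (T1 * T2)%type -> \bar R} :=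
  HB.pack (m1 \x m2)%E (Measure_isSigmaFinite.Build _ _ _ (m1 \x m2)%E (@prod_sf _ _ _ _ _ m1 m2)).

Section meas.
Local Open Scope ereal_scope.
Context {R : realType}.

Definition preserves {d} {T : measurableType d} (m : set T -> \bar R) (g : T -> T) :=
  measurable_fun setT g /\ forall A, measurable A -> m (g @^-1` A) = m A.

Lemma preserves_prod {d1 d2} {T1 : measurableType d1} {T2 : measurableType d2}
  {m1 : {sigma_finite_measure set T1 -> \bar R}}
  {m2 : {sigma_finite_measure set T2 -> \bar R}} {g h} :
  preserves m1 g -> preserves m2 h ->
  preserves (m1 \x m2) (fun p => (g p.1, h p.2)).
Proof.
move=> [mg pg] [mh ph].
have mgh : measurable_fun setT (fun p : T1 * T2 => (g p.1, h p.2)).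
  apply: measurable_fun_pair.
  exact: measurableT_comp.
  exact: measurableT_comp.
split => // X mX.
have := @product_measure_unique _ _ _ _ R m1 m2 (pushforward (m1 \x m2) (fun p => (g p.1, h p.2))).
move=> /(_ mgh) E; rewrite [RHS]E //.
move=> A B mA mB; rewrite /pushforward.
change ((m1 \x m2) ((g @^-1` A) `*` (h @^-1` B)) = m1 A * m2 B).
rewrite product_measure1E; first by congr (_ * _); [exact: pg | exact: ph].
by rewrite -[X in measurable X]setTI; apply: mg.
by rewrite -[X in measurable X]setTI; apply: mh.
Qed.

Lemma preserves_id {d} {T : measurableType d} (m : set T -> \bar R) : preserves m id.
Proof. by split. Qed.

Lemma preserves_opp : preserves (@lebesgue_measure R) (-%R : R -> R).
Proof.
split; first exact: measurable_realfun.oppr_measurable.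
move=> A mA; exact: (lebesgue_measureN mA).
Qed.

Lemma ae_preserves {d} {T : measurableType d} {m : {measure set T -> \bar R}} {g} {P : T -> Prop} :
  preserves m g -> {ae m, forall x, P x} -> {ae m, forall x, P (g x)}.
Proof.
move=> [mg pg] [N [mN N0 PN]].
exists (g @^-1` N); split.
- by rewrite -[X in measurable X]setTI; apply: mg.
- by rewrite pg.
- by move=> x /= nP; apply: PN.
Qed.

Lemma aeS {d} {T : measurableType d} {m : {measure set T -> \bar R}} {P Q : T -> Prop} :
  (forall x, P x -> Q x) -> {ae m, forall x, P x} -> {ae m, forall x, Q x}.
Proof.
move=> PQ [N [mN N0 sub]]; exists N; split => // x /= nQ; apply: sub => /= Px.
by apply: nQ; apply: PQ.
Qed.

Lemma aeS2 {d} {T : measurableType d} {m : {measure set T -> \bar R}} {P1 P2 Q : T -> Prop} :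
  (forall x, P1 x -> P2 x -> Q x) -> {ae m, forall x, P1 x} -> {ae m, forall x, P2 x} ->
  {ae m, forall x, Q x}.
Proof.
move=> PQ [N [mN N0 sub]] [M [mM M0 subM]]; exists (N `|` M); split.
- exact: measurableU.
- apply/eqP; rewrite -measure_le0 -N0 -[leRHS]adde0 -M0.
  apply: (le_trans (measureU2 _ _ _)) => //.

- move=> x /= nQ.
  have [Px|nP] := pselect (P1 x); last by left; apply: sub.
  have [Px2|nP2] := pselect (P2 x); last by right; apply: subM.
  by exfalso; apply: nQ; apply: PQ.
Qed.
End meas.

Section alg.
Variable R : realType.

Lemma cE (a b c d : R) : a = c -> b = d -> a +i* b = c +i* d.
Proof. by move=> -> ->. Qed.

Ltac csolve := rewrite /=; simpc; try (apply: cE; ring).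

Lemma mx2E (a b c d : R[i]) (i j : 'I_2) :
  mx2 a b c d i j = if i == 0 :> nat then (if j == 0 :> nat then a else b)
                           else (if j == 0 :> nat then c else d).
Proof. by rewrite mxE. Qed.

Lemma mx2_eqP (a b c d a' b' c' d' : R[i]) :
  a = a' -> b = b' -> c = c' -> d = d' -> mx2 a b c d = mx2 a' b' c' d'.
Proof. by move=> -> -> -> ->. Qed.

Lemma mx2_inj (a b c d a' b' c' d' : R[i]) :
  mx2 a b c d = mx2 a' b' c' d' -> [/\ a = a', b = b', c = c' & d = d'].
Proof.
move=> E.
have := congr1 (fun M : 'M[R[i]]_2 => M 0 0) E; have := congr1 (fun M : 'M[R[i]]_2 => M 0 1) E.
have := congr1 (fun M : 'M[R[i]]_2 => M 1 0) E; have := congr1 (fun M : 'M[R[i]]_2 => M 1 1) E.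
by rewrite !mx2E /= => -> -> -> ->.
Qed.

Lemma mulmx2 (a b c d a' b' c' d' : R[i]) :
  mx2 a b c d *m mx2 a' b' c' d' =
  mx2 (a*a'+b*c') (a*b'+b*d') (c*a'+d*c') (c*b'+d*d').
Proof.
apply/matrixP => i j; rewrite !mxE big_ord_recl big_ord1 !mxE /=.
by case: i => [[|[|i]] Hi] //=; case: j => [[|[|j]] Hj].
Qed.

Lemma mx2_1 : mx2 1 0 0 1 = 1%:M :> 'M[R[i]]_2.
Proof.
apply/matrixP => i j; rewrite !mxE.
by case: i => [[|[|i]] Hi] //=; case: j => [[|[|j]] Hj].
Qed.

Lemma xsigmaE (x : 'cV[R]_3) :
  xsigma x = mx2 (x 2 0 +i* 0) (x 0 0 +i* (- x 1 0)) (x 0 0 +i* x 1 0) ((- x 2 0) +i* 0).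
Proof.
rewrite /xsigma !big_ord_recl big_ord0 /pauli /=.
have -> : lift ord0 (lift ord0 ord0) = 2 :> 'I_3 by apply/val_inj.
have -> : lift ord0 ord0 = 1 :> 'I_3 by apply/val_inj.
have -> : ord0 = 0 :> 'I_3 by apply/val_inj.
apply/matrixP => i j; rewrite !mxE.
case: i => [[|[|i]] Hi] //=; case: j => [[|[|j]] Hj] //=; csolve.
Qed.


Lemma xsigma_inj (u v : 'cV[R]_3) : xsigma u = xsigma v -> u = v.
Proof.
rewrite !xsigmaE => /mx2_inj [E1 E2 _ _].
case: E1 => E2'; case: E2 => E0 E1.
have E1' : u 1 0 = v 1 0 by rewrite -[u 1 0]opprK E1 opprK.
apply/matrixP => i j; rewrite (ord1 j).
case: i => [[|[|[|i]]] Hi] //.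
- by have -> : Ordinal Hi = 0 by apply/val_inj.
- by have -> : Ordinal Hi = 1 by apply/val_inj.
- by have -> : Ordinal Hi = 2 by apply/val_inj.
Qed.

Lemma invmx_eq (A B : 'M[R[i]]_2) : A *m B = 1%:M -> invmx A = B.
Proof.
move=> AB; have [uA _] := mulmx1_unit AB.
by rewrite -[invmx A]mulmx1 -AB mulmxA mulVmx // mul1mx.
Qed.

Definition Dg (s0 s1 s2 : R) : 'M[R]_3 :=
  diag_mx (\row_(i < 3) (if i == 0 :> nat then s0 else if i == 1 :> nat then s1 else s2)).

Lemma DgE s0 s1 s2 (x : 'cV[R]_3) :
  [/\ (Dg s0 s1 s2 *m x) 0 0 = s0 * x 0 0, (Dg s0 s1 s2 *m x) 1 0 = s1 * x 1 0
    & (Dg s0 s1 s2 *m x) 2 0 = s2 * x 2 0].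
Proof. by rewrite /Dg mul_diag_mx !mxE. Qed.

Lemma Dg_sq s0 s1 s2 : s0 * s0 = 1 -> s1 * s1 = 1 -> s2 * s2 = 1 ->
  Dg s0 s1 s2 *m Dg s0 s1 s2 = 1%:M.
Proof.
move=> h0 h1 h2; apply/matrixP => i j; rewrite /Dg mul_diag_mx !mxE.
case: i => [[|[|[|i]]] Hi] //=; case: j => [[|[|[|j]]] Hj] //=;
  rewrite ?mulr1n ?mulr0n ?mulr0 //.
Qed.

Lemma SO3_Dg s0 s1 s2 : s0 * s0 = 1 -> s1 * s1 = 1 -> s2 * s2 = 1 ->
  s0 * s1 * s2 = 1 -> SO3 (Dg s0 s1 s2).
Proof.
move=> h0 h1 h2 h; split; first by rewrite /Dg tr_diag_mx Dg_sq.
by rewrite /Dg det_diag !big_ord_recl big_ord0 !mxE /= mulr1 mulrA.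
Qed.

Lemma col_ext (M N : 'M[R]_3) : (forall x : 'cV[R]_3, M *m x = N *m x) -> M = N.
Proof.
move=> H; apply/matrixP => i j.
have := congr1 (fun m : 'cV[R]_3 => m i 0) (H (delta_mx j 0)).
by rewrite -!colE !mxE.
Qed.

Lemma rotA_eq (A B : 'M[R[i]]_2) (D : 'M[R]_3) :
  A *m B = 1%:M -> SO3 D ->
  (forall x, xsigma (D *m x) = A *m xsigma x *m B) -> rotA A = D.
Proof.
move=> AB sD H; rewrite /rotA; apply: xget_unique.
  by split => // x; rewrite (invmx_eq _ _ AB).
move=> M [_ HM]; apply: col_ext => x; apply: xsigma_inj.
by rewrite HM H (invmx_eq _ _ AB).
Qed.

Definition A1 : 'M[R[i]]_2 := mx2 0 'i 'i 0.
Definition B1 : 'M[R[i]]_2 := mx2 0 (-'i) (-'i) 0.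
Definition A2 : 'M[R[i]]_2 := mx2 0 1 (-1) 0.
Definition B2 : 'M[R[i]]_2 := mx2 0 (-1) 1 0.
Definition D1 := Dg 1 (-1) (-1).
Definition D2 := Dg (-1) 1 (-1).

Lemma A1B1 : A1 *m B1 = 1%:M.
Proof. by rewrite mulmx2 -mx2_1; apply: mx2_eqP; csolve. Qed.
Lemma B1A1 : B1 *m A1 = 1%:M.
Proof. by rewrite mulmx2 -mx2_1; apply: mx2_eqP; csolve. Qed.
Lemma A2B2 : A2 *m B2 = 1%:M.
Proof. by rewrite mulmx2 -mx2_1; apply: mx2_eqP; csolve. Qed.
Lemma B2A2 : B2 *m A2 = 1%:M.
Proof. by rewrite mulmx2 -mx2_1; apply: mx2_eqP; csolve. Qed.
Lemma A12 : A2 *m A1 = - (A1 *m A2).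
Proof. by rewrite !mulmx2; apply/matrixP => i j; rewrite !mxE; case: ifP; case: ifP; csolve. Qed.

Lemma rotA1 : rotA A1 = D1.
Proof.
apply: (@rotA_eq A1 B1 D1 A1B1); first by apply: SO3_Dg; ring.
move=> x; rewrite !xsigmaE !mulmx2; have [-> -> ->] := DgE 1 (-1) (-1) x.
by apply: mx2_eqP; csolve.
Qed.

Lemma rotA2 : rotA A2 = D2.
Proof.
apply: (@rotA_eq A2 B2 D2 A2B2); first by apply: SO3_Dg; ring.
move=> x; rewrite !xsigmaE !mulmx2; have [-> -> ->] := DgE (-1) 1 (-1) x.
by apply: mx2_eqP; csolve.
Qed.


Lemma det_mx2 (a b c d : R[i]) : \det (mx2 a b c d) = a * d - b * c.
Proof.
rewrite (expand_det_row _ 0) big_ord_recl big_ord1 /cofactor !det_mx11 !mxE /=.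
by rewrite /bump /= expr0 expr1 mul1r mulN1r mulrN.
Qed.

Lemma adj2E (a b c d : R[i]) : adj2 (mx2 a b c d) = mx2 (a^*) (c^*) (b^*) (d^*).
Proof.
apply/matrixP => i j; rewrite !mxE.
by case: i => [[|[|i]] Hi] //=; case: j => [[|[|j]] Hj].
Qed.

Lemma SU2_A1 : SU2 A1.
Proof.
split; last by rewrite det_mx2; csolve.
by rewrite adj2E mulmx2 -mx2_1; apply: mx2_eqP; csolve.
Qed.

Lemma SU2_A2 : SU2 A2.
Proof.
split; last by rewrite det_mx2; csolve.
by rewrite adj2E mulmx2 -mx2_1; apply: mx2_eqP; csolve.
Qed.


Lemma invmx_eq3 (A B : 'M[R]_3) : A *m B = 1%:M -> invmx A = B.
Proof.
move=> AB; have [uA _] := mulmx1_unit AB.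
by rewrite -[invmx A]mulmx1 -AB mulmxA mulVmx // mul1mx.
Qed.

Lemma act1 phi (x : R3 R) : act A1 phi x = A1 *m phi ((x.1.1, - x.1.2), - x.2).
Proof.
rewrite /act rotA1 (@invmx_eq3 D1 D1); last by apply: Dg_sq; ring.
rewrite /pt3; have [-> -> ->] := DgE 1 (-1) (-1) (vec3 x).
by rewrite /vec3 !mxE /= !mul1r !mulN1r.
Qed.

Lemma act2 phi (x : R3 R) : act A2 phi x = A2 *m phi ((- x.1.1, x.1.2), - x.2).
Proof.
rewrite /act rotA2 (@invmx_eq3 D2 D2); last by apply: Dg_sq; ring.
rewrite /pt3; have [-> -> ->] := DgE (-1) 1 (-1) (vec3 x).
by rewrite /vec3 !mxE /= !mul1r !mulN1r.
Qed.

Definition F1 (p : R3 R) : R3 R := ((p.1.1, - p.1.2), - p.2).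
Definition F2 (p : R3 R) : R3 R := ((- p.1.1, p.1.2), - p.2).

Lemma pF1 : preserves (@leb3 R) F1.
Proof.
have H := (preserves_prod (preserves_id (@lebesgue_measure R)) (@preserves_opp R)).
exact: (preserves_prod (m1 := @prodsf _ _ _ _ R (@lebesgue_measure R) (@lebesgue_measure R)) H (@preserves_opp R)).
Qed.

Lemma pF2 : preserves (@leb3 R) F2.
Proof.
have H := (preserves_prod (@preserves_opp R) (preserves_id (@lebesgue_measure R))).
exact: (preserves_prod (m1 := @prodsf _ _ _ _ R (@lebesgue_measure R) (@lebesgue_measure R)) H (@preserves_opp R)).
Qed.

Lemma F1K x : F1 (F1 x) = x.
Proof. by case: x => [[a b] c]; rewrite /F1 /= !opprK. Qed.
Lemma F2K x : F2 (F2 x) = x.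
Proof. by case: x => [[a b] c]; rewrite /F2 /= !opprK. Qed.

Lemma ae_scale {phi : R3 R -> 'cV[R[i]]_2} {c : R[i]} : c != 0 ->
  {ae @leb3 R, forall x, c *: phi x = 0} -> {ae @leb3 R, forall x, phi x = 0}.
Proof.
move=> c0; apply: aeS => x /= E.
by rewrite -[phi x]scale1r -(mulVf c0) -scalerA E scaler0.
Qed.

Lemma ae_back {F : R3 R -> R3 R} {A B : 'M[R[i]]_2} {phi : R3 R -> 'cV[R[i]]_2} :
  preserves (@leb3 R) F -> (forall x, F (F x) = x) -> B *m A = 1%:M ->
  {ae @leb3 R, forall x, A *m phi (F x) = 0} -> {ae @leb3 R, forall x, phi x = 0}.
Proof.
move=> pF FK BA H; have := ae_preserves pF H; apply: aeS => x /=.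
by rewrite FK => E; rewrite -(mul1mx (phi x)) -BA -mulmxA E mulmx0.
Qed.

Lemma eigen {A : 'M[R[i]]_2} {F : R3 R -> R3 R} {phi : R3 R -> 'cV[R[i]]_2} :
  ~ {ae @leb3 R, forall x, phi x = 0} ->
  ~ lin_indep_L2 phi (fun x => A *m phi (F x)) ->
  exists c, {ae @leb3 R, forall x, A *m phi (F x) = c *: phi x}.
Proof.
move=> nz /existsNP [a /existsNP [b /not_implyP [Hab Nab]]].
have [b0|b0] := eqVneq b 0.
  exfalso; apply: Nab; split => //.
  have [a0|a0] := eqVneq a 0; first by [].
  exfalso; apply: nz; apply: (ae_scale a0); apply: aeS Hab => x /=.
  by rewrite b0 scale0r addr0.
exists (- a / b); apply: aeS Hab => x /= E.
have E2 : b *: (A *m phi (F x)) = - (a *: phi x).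
  by rewrite -(addKr (a *: phi x) (b *: (A *m phi (F x)))) E addr0.
transitivity (b^-1 *: (b *: (A *m phi (F x)))).
  by rewrite scalerA mulVf // scale1r.
rewrite E2 scalerN scalerA -scaleNr; congr (_ *: _).
by rewrite [b^-1 * a]mulrC mulNr.
Qed.

End alg.

Theorem lemma1 (R : realType) (phi : R3 R -> 'cV[R[i]]_2) :
  L2 phi ->
  ~ {ae @leb3 R, forall x, phi x = 0} ->
  exists A, @SU2 R A /\ lin_indep_L2 phi (act A phi).
Proof.
move=> _ nz.
case: (pselect (lin_indep_L2 phi (act (A1 R) phi))) => [h1|n1].
  by exists (A1 R); split; [exact: SU2_A1 | exact: h1].
case: (pselect (lin_indep_L2 phi (act (A2 R) phi))) => [h2|n2].
  by exists (A2 R); split; [exact: SU2_A2 | exact: h2].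
exfalso.
have e1 : act (A1 R) phi = fun x => A1 R *m phi (@F1 R x).
  by apply: funext => x; rewrite act1.
have e2 : act (A2 R) phi = fun x => A2 R *m phi (@F2 R x).
  by apply: funext => x; rewrite act2.
rewrite e1 in n1; rewrite e2 in n2.
have [c1 H1] := eigen R nz n1.
have [c2 H2] := eigen R nz n2.
have H1' := ae_preserves (pF2 R) H1.
have H2' := ae_preserves (pF1 R) H2.
have H12 : {ae @leb3 R, forall x, A1 R *m phi (@F1 R x) = c1 *: phi x /\ A2 R *m phi (@F2 R x) = c2 *: phi x}.
  by apply: aeS2 H1 H2 => x a b.
have Hc : {ae @leb3 R, forall x, (c1 * c2) *: phi x = 0}.
  have H3 := aeS2 (fun x a b => conj a b) H1' H2'.
  apply: aeS2 H3 H12 => x /= [h1' h2'] [h1 h2].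
  have L : (A2 R *m A1 R) *m phi (@F1 R (@F2 R x)) = (c1 * c2) *: phi x.
    by rewrite -mulmxA h1' -scalemxAr h2 scalerA.
  have L2 : (A1 R *m A2 R) *m phi (@F1 R (@F2 R x)) = (c1 * c2) *: phi x.
    have -> : @F1 R (@F2 R x) = @F2 R (@F1 R x) by [].
    by rewrite -mulmxA h2' -scalemxAr h1 scalerA mulrC.
  rewrite A12 mulNmx L2 in L.
  set y := (c1 * c2) *: phi x in L *.
  have y2 : (1 + 1 : R[i]) *: y = 0 by rewrite scalerDl scale1r -{1}L addNr.
  have two0 : (1 + 1 : R[i]) != 0.
    by rewrite -mulr2n pnatr_eq0.
  by rewrite -[y]scale1r -(mulVf two0) -scalerA y2 scaler0.
have [c0|c0] := eqVneq (c1 * c2) 0; last by apply: nz; exact: (ae_scale R c0 Hc).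
move/eqP: c0; rewrite mulf_eq0 => /orP [/eqP c0|/eqP c0].
  apply: nz; apply: (ae_back R (pF1 R) (@F1K R) (B1A1 R)).
  by apply: aeS H1 => x /= ->; rewrite c0 scale0r.
apply: nz; apply: (ae_back R (pF2 R) (@F2K R) (B2A2 R)).
by apply: aeS H2 => x /= ->; rewrite c0 scale0r.
Qed.
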